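(* For every $\epsilon>0$ there is a constant $C(\epsilon)>0$ such that $R_4(n)\le C(\epsilon)\, n^{1/2+\epsilon}$ for all positive integers $n$.
   Context: For a positive integer $n$, $R_4(n)$ denotes the number of ordered quadruples $(x,y,z,w)$ of positive integers with $n = xyzw + x + y + z + w$. *)

(* Defs.v *)
From Stdlib Require Import Reals Arith List.
Import ListNotations.

Definition rng (n : nat) : list nat := seq 1 n.

(* R4 n = #{(x,y,z,w) positive integers | n = xyzw + x + y + z + w}.
   Any such solution has x,y,z,w <= n, so enumerating over [1..n]^4
   counts all of them. *)
Definition R4 (n : nat) : nat :=
  length
    (filter
       (fun q : nat * nat * nat * nat =>
          let '(x, y, z, w) := q in
          Nat.eqb n (x * y * z * w + x + y + z + w))
       (list_prod (list_prod (list_prod (rng n) (rng n)) (rng n)) (rng n))).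

(* Main.v *)
Require Import Defs.
From Stdlib Require Import Reals Lra Lia.
Open Scope R_scope.
Module M.
From mathcomp Require Import all_boot zify.
Local Open Scope nat_scope.
Set Implicit Arguments. Unset Strict Implicit.

Definition dcount N := count (fun i => i %| N) (iota 1 N).

Lemma count_inj (T1 T2 : eqType) (P : pred T1) (s : seq T1) (g : T1 -> T2) (t : seq T2) :
  uniq s -> (forall x y, P x -> P y -> g x = g y -> x = y) ->
  (forall x, x \in s -> P x -> g x \in t) -> count P s <= size t.
Proof.
move=> us inj sub; rewrite -size_filter -(size_map g).
apply: uniq_leq_size.
- rewrite map_inj_in_uniq ?filter_uniq // => x y.
  by rewrite !mem_filter => /andP[Px _] /andP[Py _]; exact: inj.
- by move=> z /mapP[x]; rewrite mem_filter => /andP[Px xs] ->; exact: sub.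
Qed.

Lemma dvd_in N e : 0 < N -> e %| N -> e \in iota 1 N.
Proof.
move=> N0 eN; have := dvdn_leq N0 eN; rewrite mem_iota.
case: e eN => [|e]; first by rewrite dvd0n => /eqP; lia.
move=> _; lia.
Qed.

Lemma dcount_uniq N s : 0 < N -> uniq s -> count (fun e => e %| N) s <= dcount N.
Proof.
move=> N0 us.
apply: leq_trans (@count_inj _ _ _ s id (filter (fun i => i %| N) (iota 1 N)) us _ _) _ => //.
- by move=> x xs xN; rewrite mem_filter xN dvd_in.
- by rewrite size_filter.
Qed.

Lemma gcd_split e m n : coprime m n -> e %| m * n -> e = gcdn e m * gcdn e n.
Proof.
move=> co emn; apply/eqP; rewrite eqn_dvd; apply/andP; split.
- rewrite muln_gcdl [m * gcdn e n]muln_gcdr !dvdn_gcd emn dvdn_mulr ?dvdn_mull //.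
- rewrite Gauss_dvd ?dvdn_gcdl //.
  exact: (coprime_dvdl (dvdn_gcdr e m) (coprime_dvdr (dvdn_gcdr e n) co)).
Qed.

Lemma dcount_mul m n : 0 < m -> 0 < n -> coprime m n -> dcount (m * n) <= dcount m * dcount n.
Proof.
move=> m0 n0 co.
apply: leq_trans (count_inj (g := fun e => (gcdn e m, gcdn e n))
  (t := [seq (x, y) | x <- filter (fun i => i %| m) (iota 1 m),
                      y <- filter (fun i => i %| n) (iota 1 n)]) _ _ _) _.
- exact: iota_uniq.
- move=> x y xd yd [e1 e2].
  by rewrite (gcd_split co xd) (gcd_split co yd) e1 e2.
- move=> x _ xd; apply: allpairs_f; rewrite mem_filter dvdn_gcdr dvd_in //;
    [exact: dvdn_gcdr | exact: dvdn_gcdr].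
- by rewrite size_allpairs !size_filter.
Qed.

Lemma dcount_pow p a : prime p -> dcount (p ^ a) <= a.+1.
Proof.
move=> pp; rewrite /dcount.
apply: leq_trans (count_inj (g := id) (t := map (expn p) (iota 0 a.+1)) _ _ _) _.
- exact: iota_uniq.
- by [].
- move=> x _ /(dvdn_pfactor _ _ pp)[m le ->]; apply: map_f; rewrite mem_iota; lia.
- by rewrite size_map size_iota.
Qed.

Lemma expn_mono m n e : m <= n -> m ^ e <= n ^ e.
Proof. move=> le; elim: e => // e IH; rewrite !expnS; exact: leq_mul. Qed.

Lemma ineq1 K a : 0 < K -> a.+1 ^ K <= K ^ K * 2 ^ a.
Proof.
move=> K0; set t := a %/ K.
have h1 : a.+1 <= K * t.+1.
  have := divn_eq a K; have := ltn_pmod a K0; rewrite -/t; lia.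
have h2 : t.+1 <= 2 ^ t by apply: ltn_expl.
apply: leq_trans (expn_mono K (leq_trans h1 (leq_mul (leqnn K) h2))) _.
rewrite expnMn -expnM leq_mul // leq_pexp2l //.
by rewrite /t leq_divM.
Qed.

Lemma ineq2 K a p : 2 ^ K <= p -> a.+1 ^ K <= p ^ a.
Proof.
move=> le; apply: leq_trans (expn_mono K (ltn_expl a (isT : 1 < 2))) _.
rewrite -expnM mulnC expnM; exact: expn_mono.
Qed.

Lemma dcount1 : dcount 1 = 1. Proof. by []. Qed.

Lemma dbound_aux K : 0 < K -> forall N j, 0 < N ->
  (forall q, prime q -> q %| N -> j <= q) ->
  dcount N ^ K <= (K ^ K) ^ (2 ^ K - j) * N.
Proof.
move=> K0; set c := K ^ K.
have c0 : 0 < c by rewrite expn_gt0 K0.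
elim/ltn_ind => N IH j N0 HN.
have [N1|N1] := leqP N 1.
  have -> : N = 1 by lia.
  by rewrite dcount1 exp1n muln1 expn_gt0 c0.
set p := pdiv N.
have pp : prime p by apply: pdiv_prime.
have pN : p %| N by apply: pdiv_dvd.
have jp : j <= p by apply: HN.
have [M coM defN] := pfactor_coprime pp N0.
set a := logn p N in defN.
have a0 : 0 < a by rewrite /a logn_gt0 mem_primes pp N0 pN.
have M0 : 0 < M by move: N0; rewrite defN muln_gt0 => /andP[].
have p2 : 1 < p := prime_gt1 pp.
have pa2 : 1 < p ^ a by rewrite -(exp1n a) ltn_exp2r; lia.
have MN : M < N by rewrite defN -{1}(muln1 M) ltn_pmul2l.
have HM : forall q, prime q -> q %| M -> p.+1 <= q.
  move=> q qp qM.
  have qN : q %| N by rewrite defN dvdn_mulr.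
  have : p <= q by apply: pdiv_min_dvd => //; exact: prime_gt1.
  rewrite leq_eqVlt => /orP[/eqP pq|//].
  by move: coM; rewrite prime_coprime // pq qM.
have IHM := IH M MN p.+1 M0 HM.
have dN : dcount N <= dcount M * a.+1.
  rewrite defN; apply: leq_trans (dcount_mul _ _ _) _ => //.
  - by rewrite expn_gt0 prime_gt0.
  - by rewrite coprime_sym coprimeXl.
  - by rewrite leq_mul // dcount_pow.
apply: leq_trans (expn_mono K dN) _; rewrite expnMn.
have [pK|pK] := ltnP p (2 ^ K).
- have h : a.+1 ^ K <= c * p ^ a.
    apply: leq_trans (ineq1 a K0) _; rewrite leq_mul // expn_mono //; lia.
  apply: leq_trans (leq_mul IHM h) _.
  have -> : c ^ (2 ^ K - p.+1) * M * (c * p ^ a) = c ^ (2 ^ K - p.+1).+1 * N.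
    rewrite expnS defN; nia.
  rewrite leq_mul //.
  rewrite leq_pexp2l //; lia.
- have h : a.+1 ^ K <= p ^ a by apply: ineq2.
  apply: leq_trans (leq_mul IHM h) _.
  have -> : 2 ^ K - p.+1 = 0 by lia.
  by rewrite expn0 mul1n -defN leq_pmull // expn_gt0 c0.
Qed.

Lemma dbound K : 0 < K -> forall N, 0 < N -> dcount N ^ K <= (K ^ K) ^ (2 ^ K) * N.
Proof.
move=> K0 N N0; have := dbound_aux K0 (j := 0) N0 (fun _ _ _ => leq0n _).
by rewrite subn0.
Qed.

Lemma dmax K : 0 < K -> forall M, 0 < M -> exists D,
  (forall N, N <= M -> dcount N <= D) /\ D ^ K <= (K ^ K) ^ (2 ^ K) * M.
Proof.
move=> K0; elim=> [//|M IH] _.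
case: M IH => [|M] IH.
  exists 1; split; last by rewrite exp1n muln1 !expn_gt0 K0.
  by case=> [|[|]].
have [D [HD HDK]] := IH isT.
exists (maxn D (dcount M.+2)); split.
  move=> N; rewrite leq_eqVlt => /orP[/eqP ->|NM]; first by rewrite leq_maxr.
  by apply: leq_trans (leq_maxl _ _); apply: HD.
case: (leqP D (dcount M.+2)) => h.
  exact: dbound.
apply: leq_trans HDK _; rewrite leq_mul //.
Qed.

Lemma count_sum (T : Type) (P : T -> bool) (s : seq T) : \sum_(x <- s) P x = count P s.
Proof. by elim: s => [|x s IH]; rewrite ?big_nil ?big_cons //= IH. Qed.

Lemma count_le1 (T : eqType) (P : pred T) s : uniq s ->
  (forall x y, P x -> P y -> x = y) -> count P s <= 1.
Proof.
move=> us h; exact: (@count_inj _ _ P s (fun _ => tt) [:: tt] us (fun x y px py _ => h x y px py)).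
Qed.

Lemma count_0 (T : eqType) (P : pred T) s : uniq s -> (forall x, ~~ P x) -> count P s <= 0.
Proof.
move=> us h; apply: (@count_inj _ _ P s (fun _ => tt) [::] us).
- by move=> x y px; move: (h x); rewrite px.
- by move=> x _ px; move: (h x); rewrite px.
Qed.

Section Count.
Variable n : nat.
Let I := iota 1 n.
Definition F a b c d := n == a * b * c * d + a + b + c + d.
Definition T a b := \sum_(c <- I) \sum_(d <- I) F a b c d.

Lemma T_bound a b : 0 < a -> 0 < b ->
  T a b <= dcount (a * b * (n - a - b) + 1).
Proof.
move=> a0 b0; set N := a * b * (n - a - b) + 1.
have HF : forall c d, F a b c d -> a * b * c + 1 %| N.
  move=> c d /eqP e; apply/dvdnP; exists (a * b * d + 1).
  have e2 : n - a - b = a * b * c * d + c + d by lia.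
  rewrite /N e2; nia.
rewrite /T; under eq_bigr => c _ do rewrite count_sum.
apply: leq_trans (_ : \sum_(c <- I) (a * b * c + 1 %| N) <= _).
  apply: leq_sum => c _.
  case h : (a * b * c + 1 %| N) => /=.
    apply: count_le1; first exact: iota_uniq.
    move=> x y /eqP ex /eqP ey.
    have : (a * b * c + 1) * x = (a * b * c + 1) * y by nia.
    by move/eqP; rewrite eqn_mul2l addn1 /= => /eqP.
  apply: count_0; first exact: iota_uniq.
  by move=> x; apply/negP => /HF; rewrite h.
rewrite count_sum.
apply: leq_trans (@count_inj _ _ _ I (fun c => a * b * c + 1)
   (filter (fun i => i %| N) (iota 1 N)) (iota_uniq _ _) _ _) _.
- move=> x y _ _ /eqP; rewrite eqn_add2r eqn_pmul2l ?muln_gt0 ?a0 ?b0 //.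
  by move/eqP.
- by move=> x _ xN; rewrite mem_filter xN dvd_in // /N addn1.
- by rewrite size_filter.
Qed.

End Count.

Lemma length_filter (A : Type) (p : A -> bool) (s : list A) :
  length (List.filter p s) = \sum_(x <- s) p x.
Proof.
elim: s => [|x s IH] /=; first by rewrite big_nil.
by rewrite big_cons; case: (p x) => /=; rewrite IH.
Qed.

Lemma sum_app (A : Type) (F : A -> nat) (s t : list A) :
  \sum_(x <- (s ++ t)%list) F x = \sum_(x <- s) F x + \sum_(x <- t) F x.
Proof.
elim: s => [|x s IH] /=; first by rewrite big_nil.
by rewrite !big_cons IH addnA.
Qed.

Lemma sum_lmap (A B : Type) (g : A -> B) (F : B -> nat) (s : list A) :
  \sum_(x <- List.map g s) F x = \sum_(x <- s) F (g x).
Proof.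
elim: s => [|x s IH] /=; first by rewrite !big_nil.
by rewrite !big_cons IH.
Qed.

Lemma sum_prod (A B : Type) (F : A * B -> nat) s t :
  \sum_(u <- List.list_prod s t) F u = \sum_(a <- s) \sum_(b <- t) F (a, b).
Proof.
elim: s => [|x s IH] /=; first by rewrite !big_nil.
by rewrite sum_app sum_lmap IH big_cons.
Qed.

Lemma rng_iota m : rng m = iota 1 m.
Proof.
rewrite /rng; elim: m 1 => // m IH k /=; by rewrite IH.
Qed.

Lemma eqbE a b : Nat.eqb a b = (a == b).
Proof. by case: (Nat.eqb_spec a b) => [->|h]; [rewrite eqxx | apply/esym/eqP]. Qed.

Lemma R4_sum n : R4 n = \sum_(x <- iota 1 n) \sum_(y <- iota 1 n)
   \sum_(z <- iota 1 n) \sum_(w <- iota 1 n) F n x y z w.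
Proof.
rewrite /R4 length_filter !sum_prod !rng_iota.
apply: eq_bigr => x _; apply: eq_bigr => y _; apply: eq_bigr => z _;
  apply: eq_bigr => w _.
by rewrite eqbE.
Qed.

Lemma swap4 (G : nat -> nat -> nat -> nat -> nat) (I : seq nat) :
  \sum_(x <- I) \sum_(y <- I) \sum_(z <- I) \sum_(w <- I) G x y z w =
  \sum_(z <- I) \sum_(w <- I) \sum_(x <- I) \sum_(y <- I) G x y z w.
Proof.
transitivity (\sum_(x <- I) \sum_(z <- I) \sum_(y <- I) \sum_(w <- I) G x y z w).
  by apply: eq_bigr => x _; exact: exchange_big.
transitivity (\sum_(x <- I) \sum_(z <- I) \sum_(w <- I) \sum_(y <- I) G x y z w).
  by apply: eq_bigr => x _; apply: eq_bigr => z _; exact: exchange_big.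
by rewrite exchange_big; apply: eq_bigr => z _; exact: exchange_big.
Qed.

Lemma sum_const (A : Type) (c : nat) (s : seq A) : \sum_(k <- s) c = size s * c.
Proof. by elim: s => [|x s IH]; rewrite ?big_nil ?big_cons //= IH mulSn. Qed.

Lemma F_sym n x y z w : F n x y z w = F n z w x y.
Proof. by rewrite /F; congr (_ == _); lia. Qed.

Lemma main_bound K : 0 < K -> forall n, 0 < n -> exists D E s,
  [/\ R4 n <= 2 * (D * (s * E)), D ^ K <= (K ^ K) ^ (2 ^ K) * (n * n * n + 1),
      E ^ K <= (K ^ K) ^ (2 ^ K) * n & s * s <= n].
Proof.
move=> K0 n n0; set s := Nat.sqrt n.
have [D [HD HDK]] := dmax K0 (M := n * n * n + 1) (ltac:(lia)).
have [E [HE HEK]] := dmax K0 n0.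
have [sn sn2] := Nat.sqrt_spec n (le_0_n n).
have {sn} sn : s * s <= n by apply/leP.
have {sn2} sn2 : n < s.+1 * s.+1 by apply/ltP.
exists D, E, s; suff : R4 n <= 2 * (D * (s * E)) by move=> h; split => //; lia.
set I := iota 1 n.
have Tb : forall a b, a \in I -> b \in I -> T n a b <= D.
  move=> a b; rewrite !mem_iota => ha hb.
  apply: leq_trans (T_bound n _ _) (HD _ _); try lia.
  apply: leq_add => //; apply: leq_mul; first by apply: leq_mul; lia.
  lia.
pose S1 := \sum_(x <- I) \sum_(y <- I) (x * y <= s) * T n x y.
have hsplit : forall x y z w, F n x y z w <=
   (x * y <= s) * F n x y z w + (z * w <= s) * F n x y z w.
  move=> x y z w; case h : (F n x y z w); last by [].
  move/eqP: h => h.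
  case: (leqP (x * y) s) => h1 /=; first by lia.
  case: (leqP (z * w) s) => h2 /=; first by lia.
  nia.
have R4S : R4 n <= S1 + S1.
  rewrite R4_sum -/I.
  apply: leq_trans (_ : _ <= \sum_(x <- I) \sum_(y <- I) \sum_(z <- I) \sum_(w <- I)
     ((x * y <= s) * F n x y z w + (z * w <= s) * F n x y z w)) _.
    do 4! (apply: leq_sum => ? _); exact: hsplit.
  have e1 : \sum_(x <- I) \sum_(y <- I) \sum_(z <- I) \sum_(w <- I)
     ((x * y <= s) * F n x y z w + (z * w <= s) * F n x y z w) =
     \sum_(x <- I) \sum_(y <- I) \sum_(z <- I) \sum_(w <- I) ((x * y <= s) * F n x y z w)
     + \sum_(x <- I) \sum_(y <- I) \sum_(z <- I) \sum_(w <- I) ((z * w <= s) * F n x y z w).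
    rewrite -big_split; apply: eq_bigr => x _.
    rewrite -big_split; apply: eq_bigr => y _.
    rewrite -big_split; apply: eq_bigr => z _.
    by rewrite -big_split.
  rewrite e1 [X in _ + X <= _]swap4; apply: leq_add.
    rewrite /S1 /T; apply: eq_leq; apply: eq_bigr => x _; apply: eq_bigr => y _.
    rewrite big_distrr; apply: eq_bigr => z _; by rewrite big_distrr.
  rewrite /S1 /T; apply: eq_leq; apply: eq_bigr => x _; apply: eq_bigr => y _.
  rewrite big_distrr; apply: eq_bigr => z _; rewrite big_distrr.
  by apply: eq_bigr => w _; rewrite F_sym.
have S1b : S1 <= D * (s * E).
  apply: leq_trans (_ : _ <= \sum_(x <- I) \sum_(y <- I) (x * y <= s) * D) _.
    rewrite /S1 big_seq [X in _ <= X]big_seq; apply: leq_sum => x xI.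
    rewrite big_seq [X in _ <= X]big_seq; apply: leq_sum => y yI.
    by rewrite leq_mul // Tb.
  under eq_bigr => x _ do rewrite -big_distrl /=.
  rewrite -big_distrl /= mulnC leq_mul //.
  under eq_bigr => x _ do rewrite count_sum.
  apply: leq_trans (_ : _ <= \sum_(x <- I) count (fun k => x %| k) (iota 1 s)) _.
    rewrite big_seq [X in _ <= X]big_seq; apply: leq_sum => x xI.
    move: xI; rewrite mem_iota => xI.
    apply: leq_trans (@count_inj _ _ _ I (fun y => x * y)
      (filter (fun k => x %| k) (iota 1 s)) (iota_uniq _ _) _ _) _.
    - move=> y1 y2 _ _ /eqP; rewrite eqn_pmul2l; [by move/eqP | lia].
    - move=> y; rewrite mem_iota mem_filter dvdn_mulr // mem_iota => yI hy /=; nia.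
    - by rewrite size_filter.
  under eq_bigr => x _ do rewrite -count_sum.
  rewrite exchange_big /=.
  apply: leq_trans (_ : _ <= \sum_(k <- iota 1 s) E) _; last first.
    by rewrite sum_const size_iota.
  rewrite big_seq [X in _ <= X]big_seq; apply: leq_sum => k kI.
  move: kI; rewrite mem_iota => kI.
  rewrite count_sum; apply: leq_trans (dcount_uniq _ _) (HE _ _).
  - lia.
  - exact: iota_uniq.
  - nia.
lia.
Qed.

Lemma expn_pow m k : m ^ k = Nat.pow m k.
Proof. by elim: k => // k IH; rewrite expnS IH. Qed.

Lemma main_nat K : 0 < K -> exists A, 0 < A /\ forall n, 0 < n ->
  (Nat.pow (R4 n) (2 * K) <= A * Nat.pow n (K + 8))%coq_nat.
Proof.
move=> K0; set B := (K ^ K) ^ (2 ^ K).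
have B0 : 0 < B by rewrite !expn_gt0 K0.
exists (4 ^ K * ((2 * B) * (2 * B)) * (B * B)); split.
  by rewrite !muln_gt0 expn_gt0 B0.
move=> n n0; apply/leP; rewrite -!expn_pow.
have [D [E [s [h1 h2 h3 h4]]]] := main_bound K0 n0.
apply: leq_trans (expn_mono (2 * K) h1) _.
have -> : (2 * (D * (s * E))) ^ (2 * K) =
    4 ^ K * (D ^ K * D ^ K) * (s * s) ^ K * (E ^ K * E ^ K).
  rewrite expnM -!expnMn; congr (_ ^ K); rewrite -mulnn; nia.
have hD : D ^ K * D ^ K <= (2 * B * (n * n * n)) * (2 * B * (n * n * n)).
  have hx : B <= B * (n * n * n) by rewrite leq_pmulr // !muln_gt0 n0.
  have : B * (n * n * n + 1) <= 2 * B * (n * n * n) by lia.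
  move=> h; apply: leq_mul; exact: leq_trans h2 h.
have hs : (s * s) ^ K <= n ^ K by apply: expn_mono.
have hE : E ^ K * E ^ K <= (B * n) * (B * n) by apply: leq_mul.
apply: leq_trans (leq_mul (leq_mul (leq_mul (leqnn _) hD) hs) hE) _.
rewrite expnD !expnS expn0 muln1.
apply: eq_leq; nia.
Qed.
End M.

Lemma Rpower_pos (x y : R) : 0 < Rpower x y.
Proof. unfold Rpower; apply exp_pos. Qed.

Theorem theorem5 :
  forall eps : R, 0 < eps ->
  exists C : R, 0 < C /\
    forall n : nat, (1 <= n)%nat ->
      INR (R4 n) <= C * Rpower (INR n) (1/2 + eps).
Proof.
  intros eps Heps.
  destruct (archimed_cor1 (eps / 4)) as [K [HK K0]]; [lra|].
  destruct (@M.main_nat K (ssrbool.introT ssrnat.ltP K0)) as [A [A0 HA]].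
  set (c := / INR (2 * K)).
  exists (Rpower (INR A) c); split; [apply Rpower_pos|].
  intros n Hn.
  assert (Hn' : (0 < n)%nat) by exact Hn.
  pose proof (HA n (ssrbool.introT ssrnat.ltP Hn')) as H.
  apply le_INR in H.
  rewrite mult_INR, !pow_INR in H.
  set (r := INR (R4 n)) in *.
  set (m := INR n) in *.
  assert (Hm : 1 <= m) by (unfold m; apply (le_INR 1); exact Hn).
  assert (Hk : 0 < INR K) by (apply lt_0_INR; exact K0).
  assert (HA' : 0 < INR A) by (apply lt_0_INR; exact (ssrbool.elimT ssrnat.ltP A0)).
  assert (Hc : 0 < c) by (unfold c; apply Rinv_0_lt_compat; apply lt_0_INR; lia).
  assert (Hr : 0 <= r) by (unfold r; apply pos_INR).
  destruct (Rle_lt_or_eq_dec 0 r Hr) as [Hr0|Hr0].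
  2: { rewrite <- Hr0. apply Rmult_le_pos; left; apply Rpower_pos. }
  assert (E1 : r = Rpower (r ^ (2 * K)) c).
  { rewrite <- Rpower_pow by exact Hr0. rewrite Rpower_mult.
    unfold c; rewrite Rinv_r. now rewrite Rpower_1. apply not_0_INR; lia. }
  rewrite E1.
  apply Rle_trans with (Rpower (INR A * m ^ (K + 8)) c).
  { apply Rle_Rpower_l; [lra|]. split; [apply pow_lt; exact Hr0| exact H]. }
  rewrite <- Rpower_mult_distr by (try exact HA'; apply pow_lt; lra).
  apply Rmult_le_compat_l; [left; apply Rpower_pos|].
  rewrite <- Rpower_pow by lra. rewrite Rpower_mult.
  apply Rle_Rpower; [exact Hm|].
  unfold c. rewrite !plus_INR, mult_INR. simpl (INR 2). simpl (INR 8).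
  assert (E2 : (INR K + (1 + 1 + 1 + 1 + 1 + 1 + 1 + 1)) * / ((1 + 1) * INR K) = 1/2 + 4 * / INR K) by (field; lra).
  rewrite E2. lra.
Qed.
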